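(* In the standing setting, if $\lim_{t\to T_*}\dot S(t)>0$, then $T_*<\infty$.
   Context: Standing setting: Fix $\lambda\in\mathbb{R}\setminus\{-1\}$ and a nonzero bounded measurable function $\gamma_0:\mathbb{T}^2\to\mathbb{R}$ of zero mean, $\mathbb{T}^2=[0,2\pi)^2$. For $f$ on $\mathbb{T}^2$ let $\langle f\rangle_0=\frac{1}{4\pi^2}\int_{\mathbb{T}^2}f(X_0,Y_0)\,\mathrm{d}X_0\mathrm{d}Y_0$. Let $\gamma_+=\sup\gamma_0>0$, $\gamma_-=\inf\gamma_0<0$. Define $S_*>0$ by $1/S_*=-(\lambda+1)\gamma_+$ if $\lambda<-1$ and $1/S_*=-(\lambda+1)\gamma_-$ if $\lambda>-1$. Let $S(t)$ solve $\dot S=\langle[1+(\lambda+1)\gamma_0(\cdot)S]^{-\frac{1}{\lambda+1}}\rangle_0^{-2(\lambda+1)}$, $S(0)=0$, on the maximal time interval $[0,T_* )$ on which $S(t)<S_*$; $T_*\in(0,\infty]$ is the singularity time. *)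

(* Defs.v *)
From HB Require Import structures.
From mathcomp Require Import all_boot all_order all_algebra.
From mathcomp Require Import all_classical all_reals all_analysis.
Set Implicit Arguments. Unset Strict Implicit. Unset Printing Implicit Defensive.
Import Order.TTheory GRing.Theory Num.Theory.
Import numFieldNormedType.Exports.
Local Open Scope classical_set_scope.
Local Open Scope ring_scope.

Section Setting.
Variable R : realType.

Definition leb2 := ((@lebesgue_measure R) \x (@lebesgue_measure R))%E.

Definition torus : set (R * R) := `[0, 2 * pi[ `*` `[0, 2 * pi[.

Definition avg0 (f : R * R -> R) : R :=
  (4 * pi ^+ 2)^-1 * Rintegral leb2 torus f.

(* standing hypotheses on gamma_0 : bounded, measurable, zero mean, nonzero
   (i.e. not a.e. zero on T^2) *)
Definition admissible_gamma (g : R * R -> R) : Prop :=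
  [/\ measurable_fun torus g,
      (exists M : R, forall x, torus x -> `|g x| <= M),
      Rintegral leb2 torus g = 0
    & (0 < leb2 (torus `&` [set x | (g x != 0)%R]))%E].

Definition gamma_plus (g : R * R -> R) : R := sup (g @` torus).
Definition gamma_minus (g : R * R -> R) : R := inf (g @` torus).

Definition Sstar (lam : R) (g : R * R -> R) : R :=
  if lam < -1 then (- (lam + 1) * gamma_plus g)^-1
  else (- (lam + 1) * gamma_minus g)^-1.

Definition rhsF (lam : R) (g : R * R -> R) (s : R) : R :=
  powR (avg0 (fun x => powR (1 + (lam + 1) * g x * s) (- (lam + 1)^-1)))
       (- (2 * (lam + 1))).

Definition is_sol_upto (lam : R) (g : R * R -> R) (S : R -> R) (T : \bar R)
  : Prop :=
  [/\ S 0 = 0,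
      S x @[x --> 0^'+] --> S 0,
      (forall t, 0 <= t -> (t%:E < T)%E -> S t < Sstar lam g)
    & (forall t, 0 < t -> (t%:E < T)%E -> is_derive t 1 S (rhsF lam g (S t)))].

Definition maximal_sol (lam : R) (g : R * R -> R) (S : R -> R) (T : \bar R)
  : Prop :=
  [/\ (0 < T)%E, is_sol_upto lam g S T
    & forall (S' : R -> R) (T' : \bar R), (T < T')%E -> ~ is_sol_upto lam g S' T'].

Definition to_Tstar (T : \bar R) : set_system R :=
  match T with
  | EFin r => r^'-
  | +oo%E => +oo%R
  | -oo%E => -oo%R
  end.

End Setting.

(* Main.v *)
Require Import Defs.
From HB Require Import structures.
From mathcomp Require Import all_boot all_order all_algebra.
From mathcomp Require Import all_classical all_reals all_analysis.
From mathcomp Require Import lra ring.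
Import Order.TTheory GRing.Theory Num.Theory.
Import numFieldNormedType.Exports.
Local Open Scope classical_set_scope.
Local Open Scope ring_scope.

Theorem lemma4p2 (R : realType) (lam : R) (g : R * R -> R)
  (S : R -> R) (Tstar : \bar R) (l : \bar R) :
  lam != -1 ->
  admissible_gamma g ->
  maximal_sol lam g S Tstar ->
  ((derive1 S t)%:E @[t --> to_Tstar Tstar] --> l) ->
  (0 < l)%E ->
  (Tstar < +oo)%E.
Proof.
move=> _ _ [T0 [_ _ Sbd Sder] _] hl l0.
case: Tstar T0 hl Sbd Sder => [r| |] //= T0 hl Sbd Sder; first by rewrite ltry.
exfalso.
have [c c0 cl] : exists2 c : R, 0 < c & (c%:E < l)%E.
  case: l l0 {hl} => [r| |] //= l0.
    rewrite lte_fin in l0.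
    exists (r / 2); first by rewrite divr_gt0.
    rewrite lte_fin; lra.
  by exists 1; rewrite ?ltry.
have := hl _ (open_ereal_gt' cl).
move=> [A [Areal HA]].
set a := Num.max A 0 + 1.
have a0 : 0 < a.
  rewrite /a; have : 0 <= Num.max A 0 by rewrite le_max lexx orbT.
  lra.
have aA : A < a.
  rewrite /a; have : A <= Num.max A 0 by rewrite le_max lexx.
  lra.
set b := a + `|Sstar lam g - S a| / c + 1.
have ab : a < b.
  rewrite /b; have : 0 <= `|Sstar lam g - S a| / c by rewrite divr_ge0 // ltW.
  lra.
have dS (x : R) : 0 < x -> is_derive x 1 S (rhsF lam g (S x)).
  by move=> x0; apply: Sder => //; rewrite ltry.
have hM := @MVT R S (fun x => rhsF lam g (S x)) a b ab.
have h1 : forall x : R, x \in `]a, b[ -> is_derive x 1 S (rhsF lam g (S x)).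
  move=> x; rewrite in_itv /= => /andP[ax _]; apply: dS.
  exact: lt_trans a0 ax.
have h2 : {within `[a, b], continuous S}.
  apply: derivable_within_continuous => x; rewrite in_itv /= => /andP[ax _].
  have x0 : 0 < x by exact: lt_le_trans a0 ax.
  by have := dS x x0 => /@ex_derive.
have [d dab eq] := hM h1 h2.
move: dab; rewrite in_itv /= => /andP[ad db].
have d0 : 0 < d by exact: lt_trans a0 ad.
have Hd := HA d (lt_trans aA ad); rewrite /= lte_fin in Hd.
have Dd := dS d d0.
rewrite derive1E derive_val in Hd.
have hb := Sbd b (ltW (lt_trans a0 ab)) (ltry _).
have e1 : c * (b - a) = `|Sstar lam g - S a| + c.
  rewrite /b; field; exact: lt0r_neq0.
have e2 := ler_norm (Sstar lam g - S a).
have e3 : c * (b - a) < rhsF lam g (S d) * (b - a).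
  by rewrite ltr_pM2r // subr_gt0.
have e4 : `|Sstar lam g - S a| + c < S b - S a by rewrite eq -e1.
clear -e2 e4 hb c0; lra.
Qed.
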